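(* Let $R,Q,S$ be rod sets. The following are equivalent: (1) $R\xrightarrow{Q}S$; (2) $D(n,R,S)=C(n,Q)$ for all $n>0$; (3) $\langle\mathrm{Trains}(R)\rangle\equiv\langle\mathrm{Trains}(S)\rangle\cup Q\cup\langle\mathrm{Trains}(S)\rangle Q$; (4) for all $n>0$, $F(n,R)=F(n,S)+\sum_{q\in Q}(\operatorname{sign}q)F(n-\operatorname{len}q,S)$.
   Context: A rod is a triple $(r,c,\varepsilon)$ with $r$ a positive integer (length), $c$ a tag (color), $\varepsilon\in\{\pm1\}$ (sign); antirods have sign $-1$. A rod set is a set of rods with finitely many of each length. A train built from $R$ is a finite sequence of rods of $R$ (including the empty train), with length the sum of lengths and sign the product of signs; $\mathrm{Trains}(R)$ is the set of such trains, and $\langle\mathrm{Trains}(R)\rangle$ is the rod set with one rod, of the same length and sign, for each nonempty train. $F(n,R)$ is the number of positive trains of length $n$ minus the number of negative ones, with $F(0,R)=1$, $F(n,R)=0$ for $n<0$. $C(n,R)$ = (number of positive rods of length $n$) $-$ (number of antirods of length $n$); $R\equiv S$ means $C(n,R)=C(n,S)$ for all $n>0$. Unions are disjoint unions; $\overline{Q}$ reverses all signs; $QR$ has one rod per pair $(q,r)\in Q\times R$, of length $\operatorname{len}q+\operatorname{len}r$ and sign $\operatorname{sign}q\operatorname{sign}r$. $R\xrightarrow{Q}S$ means $S\equiv R\cup\overline{Q}\cup QR$. The discrepancy is $D(n,R,S)=F(n,R)-\sum_{k\in S}(\operatorname{sign}k)F(n-\operatorname{len}k,R)$. *)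

(* Defs.v *)
(* Rod sets are encoded per length: R n is the finite list of
   rods of length n, each given as (tag, sign) with sign true = +1, false = -1. *)
From mathcomp Require Import all_boot all_order all_algebra.
Set Implicit Arguments. Unset Strict Implicit. Unset Printing Implicit Defensive.
Import GRing.Theory Num.Theory.
Local Open Scope ring_scope.

Definition rodset (T : Type) := nat -> seq (T * bool).

Definition is_rodset (T : eqType) (R : rodset T) : Prop :=
  R 0%N = [::] /\ forall n, uniq (R n).

Definition sgnz (b : bool) : int := if b then 1 else -1.

Definition rod (T : Type) := (nat * (T * bool))%type.

Section Trains.
Variable T : Type.
Variable R : rodset T.

(* All trains (finite sequences of rods of R) of total length n.
   The fuel argument is harmless: every rod has length >= 1. *)
Fixpoint trains_aux (fuel n : nat) : seq (seq (rod T)) :=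
  if n == 0%N then [:: [::]] else
  match fuel with
  | 0%N => [::]
  | fuel'.+1 =>
      flatten [seq [seq (l, x) :: t | x <- R l, t <- trains_aux fuel' (n - l)]
              | l <- iota 1 n]
  end.

Definition trains (n : nat) : seq (seq (rod T)) := trains_aux n n.

(* sign of a train = product of the signs: positive iff even number of antirods *)
Definition train_pos (t : seq (rod T)) : bool :=
  ~~ odd (count (fun x : rod T => ~~ x.2.2) t).

(* F(n,R) for n >= 0 (F(0,R) = 1: the empty train) *)
Definition F (n : nat) : int := \sum_(t <- trains n) sgnz (train_pos t).

Definition Fz (m : int) : int := if m is Posz n then F n else 0.

End Trains.

Definition C (T : Type) (n : nat) (R : rodset T) : int :=
  \sum_(x <- R n) sgnz x.2.

Definition requiv (T1 T2 : Type) (R : rodset T1) (S : rodset T2) : Prop :=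
  forall n : nat, (0 < n)%N -> C n R = C n S.

Definition runion (T1 T2 : Type) (R : rodset T1) (S : rodset T2)
  : rodset (T1 + T2) :=
  fun n => [seq (inl x.1, x.2) | x <- R n] ++ [seq (inr x.1, x.2) | x <- S n].

Definition rbar (T : Type) (Q : rodset T) : rodset T :=
  fun n => [seq (x.1, ~~ x.2) | x <- Q n].

(* QR: one rod per pair (q,r), length len q + len r, sign sign q * sign r *)
Definition rprod (T1 T2 : Type) (Q : rodset T1) (R : rodset T2)
  : rodset (T1 * T2) :=
  fun n => flatten [seq [seq ((q.1, r.1), q.2 == r.2) | q <- Q l, r <- R (n - l)%N]
                   | l <- iota 0 n.+1].

Definition rtrains (T : Type) (R : rodset T) : rodset (seq (rod T)) :=
  fun n => if n == 0%N then [::] else [seq (t, train_pos t) | t <- trains R n].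

Definition rarrow (T1 T2 T3 : Type) (R : rodset T1) (Q : rodset T2)
  (S : rodset T3) : Prop :=
  requiv S (runion R (runion (rbar Q) (rprod Q R))).

(* D(n,R,S) = F(n,R) - sum_{k in S} sign k * F(n - len k, R); rods k with
   len k > n contribute 0 since F vanishes at negative arguments, so the sum is
   over lengths l <= n. *)
Definition D (T1 T2 : Type) (n : nat) (R : rodset T1) (S : rodset T2) : int :=
  F R n - \sum_(l < n.+1) \sum_(k <- S l) sgnz k.2 * Fz R (n%:Z - l%:Z).

(* Main.v *)
Require Import Defs.
From mathcomp Require Import all_boot all_order all_algebra.
From mathcomp Require Import ring.
Import GRing.Theory Num.Theory.
Local Open Scope ring_scope.

Definition conv (a b : nat -> int) (n : nat) : int :=
  \sum_(i < n.+1) a i * b (n - i)%N.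
Definition del (n : nat) : int := if n == 0%N then 1 else 0.

Lemma conv_extl a a' b n : (forall k, a k = a' k) -> conv a b n = conv a' b n.
Proof. by move=> H; apply: eq_bigr => i _; rewrite H. Qed.
Lemma conv_extr a b b' n : (forall k, b k = b' k) -> conv a b n = conv a b' n.
Proof. by move=> H; apply: eq_bigr => i _; rewrite H. Qed.

Lemma convC a b n : conv a b n = conv b a n.
Proof.
rewrite /conv (reindex_inj rev_ord_inj) /=; apply: eq_bigr => i _.
by rewrite subSS subKn 1?mulrC // -ltnS.
Qed.

Lemma convDl a b c n : conv (fun k => a k + b k) c n = conv a c n + conv b c n.
Proof. by rewrite /conv -big_split; apply: eq_bigr => i _; rewrite mulrDl. Qed.
Lemma convBl a b c n : conv (fun k => a k - b k) c n = conv a c n - conv b c n.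
Proof. by rewrite /conv -sumrB; apply: eq_bigr => i _; rewrite mulrBl. Qed.
Lemma convDr a b c n : conv c (fun k => a k + b k) n = conv c a n + conv c b n.
Proof. by rewrite /conv -big_split; apply: eq_bigr => i _; rewrite mulrDr. Qed.
Lemma convBr a b c n : conv c (fun k => a k - b k) n = conv c a n - conv c b n.
Proof. by rewrite /conv -sumrB; apply: eq_bigr => i _; rewrite mulrBr. Qed.

Lemma conv1l a n : conv del a n = a n.
Proof.
rewrite /conv big_ord_recl /= /del eqxx mul1r subn0 big1 ?addr0 // => i _.
by rewrite mul0r.
Qed.
Lemma conv1r a n : conv a del n = a n.
Proof. by rewrite convC conv1l. Qed.

Definition pol (N : nat) (a : nat -> int) : {poly int} := \poly_(k < N.+1) a k.

Lemma pol_coef N a i : (i <= N)%N -> (pol N a)`_i = a i.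
Proof. by move=> H; rewrite coef_poly ltnS H. Qed.

Lemma pol_mul N a b i : (i <= N)%N -> (pol N a * pol N b)`_i = conv a b i.
Proof.
move=> H; rewrite coefM; apply: eq_bigr => j _.
have Hj : (j <= N)%N by apply: leq_trans H; rewrite -ltnS.
by rewrite !pol_coef // (leq_trans (leq_subr _ _) H).
Qed.

Lemma convA a b c n : conv (conv a b) c n = conv a (conv b c) n.
Proof.
have E1 : conv (conv a b) c n = (pol n a * pol n b * pol n c)`_n.
  rewrite coefM; apply: eq_bigr => j _.
  have Hj : (j <= n)%N by rewrite -ltnS.
  by rewrite pol_mul // pol_coef // leq_subr.
have E2 : conv a (conv b c) n = (pol n a * (pol n b * pol n c))`_n.
  rewrite coefM; apply: eq_bigr => j _.
  have Hj : (j <= n)%N by rewrite -ltnS.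
  by rewrite pol_mul ?leq_subr // pol_coef.
by rewrite E1 E2 mulrA.
Qed.

Lemma trains_auxS (T : Type) (R : rodset T) f m' : trains_aux R f.+1 m'.+1 = flatten [seq [seq (l, x) :: t | x <- R l, t <- trains_aux R f (m'.+1 - l)] | l <- iota 1 m'.+1].
Proof. by []. Qed.

Lemma trains_aux_fuel (T : Type) (R : rodset T) f1 f2 m :
  (m <= f1)%N -> (m <= f2)%N -> trains_aux R f1 m = trains_aux R f2 m.
Proof.
have U := @trains_auxS T R.
elim: f1 f2 m => [|f1 IH] [|f2] [|m] // H1 H2.
rewrite !U; congr flatten; apply/eq_in_map => l; rewrite mem_iota => /andP[l1 _].
congr flatten; apply: eq_map => x; congr map; apply: IH; rewrite leq_subLR;
  by rewrite (leq_trans _ (leq_add l1 (leqnn _))) ?add1n.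
Qed.

Lemma sgnzN b : sgnz (~~ b) = - sgnz b.
Proof. by case: b. Qed.

Lemma train_pos_cons (T : Type) (y : rod T) t :
  sgnz (train_pos (y :: t)) = sgnz y.2.2 * sgnz (train_pos t).
Proof.
rewrite /train_pos /=; case: y.2.2 => /=; rewrite add0n; first by rewrite mul1r.
by rewrite sgnzN mulN1r.
Qed.

Lemma F0 (T : Type) (R : rodset T) : F R 0 = 1.
Proof. by rewrite /F /trains /= big_seq1. Qed.

Lemma F_rec (T : Type) (R : rodset T) n : (0 < n)%N ->
  F R n = \sum_(l <- iota 1 n) C l R * F R (n - l).
Proof.
case: n => // n _; rewrite /F /trains trains_auxS big_flatten big_map.
apply: eq_big_seq => l; rewrite mem_iota => /andP[l1 l2].
rewrite big_allpairs_dep /C mulr_suml; apply: eq_bigr => x _.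
rewrite mulr_sumr (@trains_aux_fuel _ R n (n.+1 - l) (n.+1 - l)); last 2 first.
- by rewrite leq_subLR (leq_trans _ (leq_add l1 (leqnn _))) ?add1n.
- by [].
by apply: eq_bigr => t _; rewrite train_pos_cons.
Qed.

Lemma sum_iota1 (G : nat -> int) k m :
  \sum_(l <- iota m.+1 k) G l = \sum_(i <- iota m k) G i.+1.
Proof. by elim: k m => [|k IH] m; rewrite ?big_nil //= !big_cons IH. Qed.

Lemma F_conv (T : Type) (R : rodset T) : R 0%N = [::] ->
  forall n, F R n = del n + conv (fun k => C k R) (fun k => F R k) n.
Proof.
move=> R0 [|n]; first by rewrite F0 /conv big_ord1 /C R0 big_nil mul0r addr0.
have -> : del n.+1 = 0 by [].
rewrite F_rec // add0r /conv big_ord_recl /C R0 big_nil mul0r add0r.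
rewrite -(big_mkord xpredT (fun i => (\sum_(x <- R i.+1) sgnz x.2) * F R (n.+1 - i.+1))).
by rewrite /index_iota subn0 sum_iota1.
Qed.

Lemma C_union (T1 T2 : Type) (A : rodset T1) (B : rodset T2) n :
  C n (runion A B) = C n A + C n B.
Proof. by rewrite /C /runion big_cat !big_map. Qed.

Lemma C_bar (T : Type) (A : rodset T) n : C n (rbar A) = - C n A.
Proof. by rewrite /C /rbar big_map -sumrN; apply: eq_bigr => x _; rewrite sgnzN. Qed.

Lemma C_prod (T1 T2 : Type) (A : rodset T1) (B : rodset T2) n :
  C n (rprod A B) = conv (fun k => C k A) (fun k => C k B) n.
Proof.
rewrite /C /rprod big_flatten big_map /conv.
rewrite -(big_mkord xpredT (fun i => (\sum_(x <- A i) sgnz x.2) * (\sum_(x <- B (n - i)%N) sgnz x.2))).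
rewrite /index_iota subn0; apply: eq_bigr => l _.
rewrite big_allpairs_dep mulr_suml; apply: eq_bigr => x _.
by rewrite mulr_sumr; apply: eq_bigr => y _ /=; case: x.2; case: y.2.
Qed.

Lemma C_trains (T : Type) (A : rodset T) n :
  C n (rtrains A) = if n == 0%N then 0 else F A n.
Proof. by rewrite /C /rtrains; case: ifP => _; rewrite ?big_nil // big_map. Qed.

Lemma C0 (T : Type) (A : rodset T) : A 0%N = [::] -> C 0 A = 0.
Proof. by rewrite /C => ->; rewrite big_nil. Qed.

Lemma sum_Fz (T1 T2 : Type) (A : rodset T1) (B : rodset T2) n :
  \sum_(l < n.+1) \sum_(k <- A l) sgnz k.2 * Fz B (n%:Z - l%:Z)
  = conv (fun k => C k A) (fun k => F B k) n.
Proof.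
apply: eq_bigr => l _; rewrite /C mulr_suml; apply: eq_bigr => x _.
by rewrite subzn // -ltnS.
Qed.

Section Alg.
Variables (f g r s q : nat -> int).
Hypothesis Hr : forall n, f n = del n + conv r f n.
Hypothesis Hs : forall n, g n = del n + conv s g n.

Lemma Hr' k : conv r f k = f k - del k.
Proof. rewrite Hr; ring. Qed.
Lemma Hs' k : conv s g k = g k - del k.
Proof. rewrite Hs; ring. Qed.

Lemma A12 : (forall n, s n = r n - q n + conv q r n) ->
  (forall n, f n - conv s f n = del n + q n).
Proof.
move=> H1 n.
rewrite (@conv_extl s (fun k => r k - q k + conv q r k) f n H1) convDl convBl.
rewrite convA (@conv_extr q _ (fun k => f k - del k) n Hr') convBr conv1r Hr'.
ring.
Qed.

Lemma A21 : (forall n, f n - conv s f n = del n + q n) ->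
  (forall n, s n = r n - q n + conv q r n).
Proof.
move=> H2 n.
have Fu : forall k, del k = conv f (fun j => del j - r j) k.
  by move=> k; rewrite convBr conv1r convC Hr'; ring.
have H2' : forall k, conv s f k = f k - del k - q k.
  by move=> k; rewrite -[conv s f k]opprK -[- conv s f k](addKr (f k)) H2; ring.
rewrite -[s n]conv1r (@conv_extr s _ _ n Fu) -convA.
rewrite (@conv_extl _ (fun k => f k - del k - q k) _ n H2') !convBl.
rewrite -(Fu n) conv1l !convBr conv1r.
ring.
Qed.

Lemma A24 : (forall n, f n - conv s f n = del n + q n) ->
  (forall n, f n = g n + conv q g n).
Proof.
move=> H2 n.
rewrite -{1}[g n]conv1l -convDl.
rewrite (@conv_extl (fun k => del k + q k) (fun k => f k - conv s f k) g n); last by move=> k; rewrite H2.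
rewrite convBl (@conv_extl (conv s f) (conv f s) g n (fun k => convC s f k)) convA -convBr.
rewrite (@conv_extr f _ del n); first by rewrite conv1r.
by move=> k; rewrite Hs'; ring.
Qed.

Lemma A42 : (forall n, f n = g n + conv q g n) ->
  (forall n, f n - conv s f n = del n + q n).
Proof.
move=> H4 n.
have Dg : forall k, conv (fun j => del j - s j) g k = del k.
  by move=> k; rewrite convBl conv1l Hs'; ring.
rewrite -{1}[f n]conv1l -convBl.
rewrite (@conv_extr _ f (fun k => g k + conv q g k) n H4) convDr Dg.
rewrite (convC (fun j => del j - s j)) convA (@conv_extr q _ del n (fun k => etrans (convC _ _ k) (Dg k))) conv1r.
done.
Qed.
End Alg.

Theorem mainTheorem8 (T1 T2 T3 : eqType)
  (R : rodset T1) (Q : rodset T2) (S : rodset T3) :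
  is_rodset R -> is_rodset Q -> is_rodset S ->
  [<-> rarrow R Q S;
       forall n : nat, (0 < n)%N -> D n R S = C n Q;
       requiv (rtrains R) (runion (rtrains S) (runion Q (rprod (rtrains S) Q)));
       forall n : nat, (0 < n)%N ->
         F R n = F S n + \sum_(l < n.+1) \sum_(q <- Q l) sgnz q.2 * Fz S (n%:Z - l%:Z)].
Proof.
move=> [R0 _] [Q0 _] [S0 _].
pose f := fun k => F R k; pose g := fun k => F S k.
pose r := fun k => C k R; pose s := fun k => C k S; pose q := fun k => C k Q.
have Hr : forall n, f n = del n + conv r f n := @F_conv _ R R0.
have Hs : forall n, g n = del n + conv s g n := @F_conv _ S S0.
have r0 : r 0%N = 0 by apply: C0.
have s0 : s 0%N = 0 by apply: C0.
have q0 : q 0%N = 0 by apply: C0.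
have f0 : f 0%N = 1 by apply: F0.
have g0 : g 0%N = 1 by apply: F0.
have c0 : forall a b, conv a b 0 = a 0%N * b 0%N by move=> a b; rewrite /conv big_ord1.
have E1 : rarrow R Q S <-> (forall n, s n = r n - q n + conv q r n).
  rewrite /rarrow /requiv; split => H n.
    case: n => [|n]; first by rewrite c0 s0 r0 q0; ring.
    by rewrite /s H // !C_union C_bar C_prod /r /q; ring.
  move=> _; rewrite !C_union C_bar C_prod -/(s n) H /r /q; ring.
have E2 : (forall n : nat, (0 < n)%N -> D n R S = C n Q) <->
          (forall n, f n - conv s f n = del n + q n).
  split => H n.
    case: n => [|n]; first by rewrite c0 s0 f0 q0; ring.
    have := H n.+1 isT; rewrite /D sum_Fz /f /s /q /del /= => <-; ring.
  case: n => // n _; have := H n.+1; rewrite /D sum_Fz /f /s /q /del /= => ->; ring.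
have E3 : requiv (rtrains R) (runion (rtrains S) (runion Q (rprod (rtrains S) Q)))
          <-> (forall n, f n = g n + conv q g n).
  have K : forall n, C n (rprod (rtrains S) Q) = conv q g n - q n.
    move=> n; rewrite C_prod convC.
    rewrite (@conv_extr q (fun k => C k (rtrains S)) (fun k => g k - del k) n); last first.
      by move=> [|k] /=; rewrite C_trains //= /del ?g0; ring.
    by rewrite convBr conv1r.
  rewrite /requiv; split => H n.
    case: n => [|n]; first by rewrite c0 q0 f0 g0; ring.
    have := H n.+1 isT; rewrite !C_union K !C_trains /= -/(f n.+1) -/(g n.+1) => ->; ring.
  case: n => // n _; rewrite !C_union K !C_trains /= -/(f n.+1) -/(g n.+1) H; ring.
have E4 : (forall n : nat, (0 < n)%N ->
         F R n = F S n + \sum_(l < n.+1) \sum_(q <- Q l) sgnz q.2 * Fz S (n%:Z - l%:Z))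
          <-> (forall n, f n = g n + conv q g n).
  split => H n.
    case: n => [|n]; first by rewrite c0 q0 f0 g0; ring.
    by rewrite /f H // sum_Fz.
  by move=> _; rewrite sum_Fz; apply: H.
tfae.
- by move/E1 => H; apply/E2; exact: (@A12 f r s q Hr).
- by move/E2 => H; apply/E3; exact: (@A24 f g s q Hs).
- by move/E3 => H; apply/E4.
- by move/E4 => H; apply/E1; apply: (@A21 f r s q Hr); exact: (@A42 f g s q Hs).
Qed.
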